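(* Let $\tau$ be a decorated ideal triangulation of $S$ with underlying ideal triangulation $\lambda$, and let $\tau'$ be obtained from $\tau$ by a reindexing, a mark rotation or a diagonal exchange, with underlying ideal triangulation $\lambda'$. For every exponential Kashaev coordinate vector $(y_1,z_1,\dots,y_{2m},z_{2m})\in\mathbb R_{>0}^{4m}$ of $\tau$, let $(y',z')$ be its Kashaev coordinate change to $\tau'$, let $x=F_\tau(y,z)$ and $x'=F_{\tau'}(y',z')$. Then $x'$ is the shear coordinate change of $x$ from $\lambda$ to $\lambda'$: $x'=x$ if $\tau'$ is obtained by a reindexing or a mark rotation, and $x'$ is given by the diagonal exchange formulas in the context if $\tau'=\varphi_{\mu\nu}(\tau)$.
   Context: Let $\bar S$ be a closed oriented surface of genus $g$, $S=\bar S\setminus\{v_1,\dots,v_p\}$, $p\ge1$, $m:=2g-2+p>0$. An ideal triangulation has $3m$ edges and $2m$ triangles (triangulation of $\bar S$ with vertex set $\{v_1,\dots,v_p\}$; two sides of a triangle may lie on the same edge). A decorated ideal triangulation $\tau$ has triangles numbered $\tau_1,\dots,\tau_{2m}$ and a marked corner in each; forgetting numbering and marks gives its underlying ideal triangulation $\lambda$, whose edges are indexed $\lambda_1,\dots,\lambda_{3m}$. Sides of $\tau_\mu$ are numbered $0,1,2$ counterclockwise, the $0$-side opposite the marked corner. Moves: reindexing $\alpha(\tau)$ ($k$-th triangle is $\tau_{\alpha(k)}$); mark rotation $\rho_i$ (mark of $\tau_i$ moves to the next corner counterclockwise); diagonal exchange $\varphi_{\mu\nu}$, applicable when distinct $\tau_\mu,\tau_\nu$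 share an edge which is the $0$-side of both: write the quadrilateral $\tau_\mu\cup\tau_\nu$ with corners $P,Q,R,T$ in counterclockwise order, $\tau_\mu=TPQ$ marked at $P$, $\tau_\nu=QRT$ marked at $R$, common edge $\lambda_i=QT$, and $\lambda_j=TP$, $\lambda_k=RT$, $\lambda_l=QR$, $\lambda_m=PQ$ (some of $\lambda_j,\lambda_k,\lambda_l,\lambda_m$ may coincide); $\varphi_{\mu\nu}(\tau)$ replaces $QT$ by $PR$, with new $\mu$-th triangle $RTP$ marked at $T$ and new $\nu$-th triangle $PQR$ marked at $Q$, others unchanged; $\lambda'$ has edges $\lambda'_h=\lambda_h$ for $h\ne i$ and $\lambda'_i=PR$. For reindexings and mark rotations $\lambda'=\lambda$ with the same edge indexing. Kashaev coordinate change (exponential coordinates): reindexing: $(y'_k,z'_k)=(y_{\alpha(k)},z_{\alpha(k)})$; mark rotation $\rho_i$: $(y'_i,z'_i)=(z_i/y_i,1/y_i)$, others unchanged; diagonal exchange $\varphi_{\mu\nu}$: $y'_\mu=z_\nu/D$, $z'_\mu=y_\mu/D$, $y'_\nu=z_\mu/D$, $z'_\nu=y_\nu/D$ with $D=y_\mu y_\nu+z_\mu z_\nu$, others unchanged. The map $F_\tau:\mathbb R_{>0}^{4m}\to\mathbb R_{>0}^{3m}$: set $h^0_\mu=y_\mu/z_\mu$, $h^1_\mu=z_\mu$, $h^2_\mu=1/y_\mu$ and $x_h=h^s_\mu h^t_\nu$ whenever $\lambda_h$ bounds the $s$-side of $\tau_\mu$ and the $t$-side of $\tau_\nu$. Shear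 coordinate change for the diagonal exchange at $\lambda_i$: $x'_h=x_h$ for $h\notin\{i,j,k,l,m\}$, $x'_i=x_i^{-1}$, and: Case 1 ($\lambda_j,\lambda_k,\lambda_l,\lambda_m$ distinct): $x'_j=(1+x_i)x_j$, $x'_k=(1+x_i^{-1})^{-1}x_k$, $x'_l=(1+x_i)x_l$, $x'_m=(1+x_i^{-1})^{-1}x_m$; Case 2 ($\lambda_j=\lambda_k$, $\lambda_l\ne\lambda_m$): $x'_j=x_ix_j$, $x'_l=(1+x_i)x_l$, $x'_m=(1+x_i^{-1})^{-1}x_m$; Case 3 ($\lambda_j=\lambda_m$, $\lambda_k\neq\lambda_l$): $x'_j=x_ix_j$, $x'_k=(1+x_i^{-1})^{-1}x_k$, $x'_l=(1+x_i)x_l$; Case 4 ($\lambda_j=\lambda_l$, $\lambda_k\ne\lambda_m$): $x'_j=(1+x_i)^2x_j$, $x'_k=(1+x_i^{-1})^{-1}x_k$, $x'_m=(1+x_i^{-1})^{-1}x_m$; Case 5 ($\lambda_k=\lambda_m$, $\lambda_j\ne\lambda_l$): $x'_j=(1+x_i)x_j$, $x'_k=(1+x_i^{-1})^{-2}x_k$, $x'_l=(1+x_i)x_l$; Case 6 ($\lambda_j=\lambda_k$ and $\lambda_l=\lambda_m$): $x'_j=x_ix_j$, $x'_l=x_ix_l$; Case 7 ($\lambda_j=\lambda_m$ and $\lambda_k=\lambda_l$): $x'_j=x_ix_j$, $x'_k=x_ix_k$; Case 8 ($\lambda_j=\lambda_l$ and $\lambda_k=\lambda_m$): $x'_j=(1+x_i)^2x_j$,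 $x'_k=(1+x_i^{-1})^{-2}x_k$. *)

(* Defs.v *)
From mathcomp Require Import all_boot all_order all_algebra all_fingroup.
Set Implicit Arguments. Unset Strict Implicit. Unset Printing Implicit Defensive.
Import Order.TTheory GRing.Theory Num.Theory.
Local Open Scope ring_scope.

(* A decorated ideal triangulation with 2m numbered triangles and 3m numbered
   edges is encoded by  e mu s = index of the edge bounding the s-side of
   triangle tau_mu  (sides numbered 0,1,2 counterclockwise, the 0-side opposite
   the marked corner).  Corner c of a triangle is the corner opposite its
   c-side; in counterclockwise order the s-side runs from corner s+1 to
   corner s+2 (indices mod 3). *)
Definition dtri (m : nat) := 'I_(2 * m)%N -> 'I_3 -> 'I_(3 * m)%N.

Definition side0 : 'I_3 := @Ordinal 3 0 isT.
Definition side1 : 'I_3 := @Ordinal 3 1 isT.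
Definition side2 : 'I_3 := @Ordinal 3 2 isT.

Definition tri_adj (m : nat) (e : dtri m) : rel 'I_(2 * m)%N :=
  fun mu nu => [exists s : 'I_3, exists t : 'I_3, e mu s == e nu t].

(* corner identifications induced by gluing the two sides of each edge
   (orientation reversing, as the surface is oriented) *)
Definition corner_adj (m : nat) (e : dtri m) : rel ('I_(2 * m)%N * 'I_3) :=
  fun a b =>
  [exists s : 'I_3, exists t : 'I_3,
     [&& (a.1, s) != (b.1, t), e a.1 s == e b.1 t &
         ((a.2 == ordS s) && (b.2 == ordS (ordS t))) ||
         ((a.2 == ordS (ordS s)) && (b.2 == ordS t))]].

(* e is a decorated ideal triangulation of the oriented surface of genus g with
   p punctures: every edge bounds exactly two sides, the glued surface is
   connected and has exactly p vertices (Euler characteristic then forces the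
   genus to be g since m = 2g - 2 + p). *)
Definition is_decorated_ideal_triangulation (g p m : nat) (e : dtri m) : Prop :=
  [/\ (forall h : 'I_(3 * m)%N,
         #|[pred a : 'I_(2 * m)%N * 'I_3 | e a.1 a.2 == h]| = 2%N),
      (forall mu nu : 'I_(2 * m)%N, connect (tri_adj e) mu nu) &
      n_comp (corner_adj e) predT = p].

Definition tri_reindex (m : nat) (alpha : {perm 'I_(2 * m)%N}) (e : dtri m) : dtri m :=
  fun k s => e (alpha k) s.

(* mark rotation rho_i: mark moves to the next corner counterclockwise, so the
   new s-side is the old (s+1)-side *)
Definition mark_rot (m : nat) (i : 'I_(2 * m)%N) (e : dtri m) : dtri m :=
  fun k s => if k == i then e k (ordS s) else e k s.

(* diagonal exchange phi_{mu nu} (applicable when mu <> nu and the 0-sides of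
   tau_mu, tau_nu lie on the same edge lambda_i).  With the notation of the
   paper: lambda_j = e mu 1 (TP), lambda_m = e mu 2 (PQ), lambda_l = e nu 1 (QR),
   lambda_k = e nu 2 (RT).  New mu-th triangle RTP marked at T has sides
   (PR, RT, TP) = (i, k, j); new nu-th triangle PQR marked at Q has sides
   (RP, PQ, QR) = (i, m, l); the new edge PR keeps the index i. *)
Definition tri_flip (m : nat) (mu nu : 'I_(2 * m)%N) (e : dtri m) : dtri m :=
  fun k s =>
    if k == mu then
      (if s == side0 then e mu side0 else if s == side1 then e nu side2
       else e mu side1)
    else if k == nu then
      (if s == side0 then e nu side0 else if s == side1 then e mu side2
       else e nu side1)
    else e k s.

Section Coords.
Variable R : realFieldType.

Definition reindex_y (m : nat) (alpha : {perm 'I_(2 * m)%N})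
  (y : 'I_(2 * m)%N -> R) : 'I_(2 * m)%N -> R := fun k => y (alpha k).

Definition rot_y (m : nat) (i : 'I_(2 * m)%N) (y z : 'I_(2 * m)%N -> R)
  : 'I_(2 * m)%N -> R := fun k => if k == i then z i / y i else y k.
Definition rot_z (m : nat) (i : 'I_(2 * m)%N) (y z : 'I_(2 * m)%N -> R)
  : 'I_(2 * m)%N -> R := fun k => if k == i then (y i)^-1 else z k.

Definition flipD (m : nat) (mu nu : 'I_(2 * m)%N) (y z : 'I_(2 * m)%N -> R) : R :=
  y mu * y nu + z mu * z nu.
Definition flip_y (m : nat) (mu nu : 'I_(2 * m)%N) (y z : 'I_(2 * m)%N -> R)
  : 'I_(2 * m)%N -> R := fun k =>
  if k == mu then z nu / flipD mu nu y z
  else if k == nu then z mu / flipD mu nu y z else y k.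
Definition flip_z (m : nat) (mu nu : 'I_(2 * m)%N) (y z : 'I_(2 * m)%N -> R)
  : 'I_(2 * m)%N -> R := fun k =>
  if k == mu then y mu / flipD mu nu y z
  else if k == nu then y nu / flipD mu nu y z else z k.

Definition hcoord (m : nat) (y z : 'I_(2 * m)%N -> R) (mu : 'I_(2 * m)%N)
  (s : 'I_3) : R :=
  if s == side0 then y mu / z mu else if s == side1 then z mu else (y mu)^-1.

Definition Fmap (m : nat) (e : dtri m) (y z : 'I_(2 * m)%N -> R)
  : 'I_(3 * m)%N -> R := fun h =>
  \prod_(a : 'I_(2 * m)%N * 'I_3 | e a.1 a.2 == h) hcoord y z a.1 a.2.

(* Shear coordinate change for the diagonal exchange at lambda_i, with the
   surrounding edges lambda_j, lambda_k, lambda_l, lambda_em.  Each occurrence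
   of h among j, l contributes a factor (1 + x_i), each occurrence among k, em
   a factor (1 + x_i^-1)^-1; this reproduces exactly Cases 1-8 of the paper
   (e.g. (1+x)(1+x^-1)^-1 = x) and their mirror images. *)
Definition shear_flip (m : nat) (i j k l em : 'I_(3 * m)%N)
  (x : 'I_(3 * m)%N -> R) : 'I_(3 * m)%N -> R := fun h =>
  if h == i then (x i)^-1
  else x h * (if h == j then 1 + x i else 1) * (if h == l then 1 + x i else 1)
           * (if h == k then (1 + (x i)^-1)^-1 else 1)
           * (if h == em then (1 + (x i)^-1)^-1 else 1).

End Coords.

(* Main.v *)
Require Import Defs.
From mathcomp Require Import all_boot all_order all_algebra all_fingroup.
From mathcomp Require Import ring lra.
Import Order.TTheory GRing.Theory Num.Theory.
Local Open Scope ring_scope.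
Set Implicit Arguments. Unset Strict Implicit.

Definition hc (R : realFieldType) m (e : dtri m) (y z : 'I_(2 * m)%N -> R) h k s : R :=
  if e k s == h then hcoord y z k s else 1.
Definition T (R : realFieldType) m (e : dtri m) (y z : 'I_(2 * m)%N -> R) h k : R :=
  hc e y z h k side0 * hc e y z h k side1 * hc e y z h k side2.

Lemma FmapE (R : realFieldType) m (e : dtri m) (y z : 'I_(2 * m)%N -> R) h :
  Fmap e y z h = \prod_k T e y z h k.
Proof.
rewrite /Fmap big_mkcond /=.
rewrite -(pair_big xpredT xpredT (fun k s => hc e y z h k s)) /=.
apply: eq_bigr => k _.
rewrite !big_ord_recl big_ord0 mulr1 /T mulrA.
have -> : (ord0 : 'I_3) = side0 by apply/val_inj.
idtac.
idtac.
by congr (_ * _ * _); congr hc; apply/val_inj.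
Qed.
Lemma card3 (T:finType) (A : pred T) a b c : a \in A -> b \in A -> c \in A -> a != b -> c != a -> c != b -> (3 <= #|A|)%N.
Proof.
move=> Ha Hb Hc ab ca cb.
have sub : c |: [set a; b] \subset A.
  by apply/subsetP=> x; rewrite !inE => /or3P[] /eqP->.
apply: leq_trans (subset_leq_card sub).
rewrite cardsU1 cards2 !inE negb_or ab ca cb.
by [].
Qed.

Section Main.
Variables (R : realFieldType) (m : nat) (e : dtri m) (y z : 'I_(2 * m)%N -> R).
Hypothesis hyz : forall k, 0 < y k /\ 0 < z k.

Lemma yn0 k : y k != 0. Proof. by have [/gt_eqF -> _] := hyz k. Qed.
Lemma zn0 k : z k != 0. Proof. by have [_ /gt_eqF ->] := hyz k. Qed.

Lemma reindex_ok (alpha : {perm 'I_(2 * m)%N}) h :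
  Fmap (tri_reindex alpha e) (reindex_y alpha y) (reindex_y alpha z) h = Fmap e y z h.
Proof.
rewrite !FmapE [RHS](reindex_inj (@perm_inj _ alpha)) /=.
by apply: eq_bigr.
Qed.

Lemma rot_ok (i : 'I_(2 * m)%N) h :
  Fmap (mark_rot i e) (rot_y i y z) (rot_z i y z) h = Fmap e y z h.
Proof.
rewrite !FmapE (bigD1 i) //= [RHS](bigD1 i) //=.
congr (_ * _).
  have o0 : ordS side0 = side1 by apply/val_inj.
  have o1 : ordS side1 = side2 by apply/val_inj.
  have o2 : ordS side2 = side0 by apply/val_inj.
  rewrite /T /hc /mark_rot /hcoord /rot_y /rot_z eqxx o0 o1 o2 /=.
  have Hy := yn0 i; have Hz := zn0 i.
  case: (e i side0 == h); case: (e i side1 == h); case: (e i side2 == h);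
    rewrite ?mulr1 ?mul1r; try field; by rewrite ?Hy ?Hz.
apply: eq_bigr => k /negbTE hk.
by rewrite /T /hc /mark_rot /hcoord /rot_y /rot_z hk.
Qed.


Section Flip.
Hypothesis Hc : forall h : 'I_(3 * m)%N,
  #|[pred a : 'I_(2 * m)%N * 'I_3 | e a.1 a.2 == h]| = 2%N.
Variables (mu nu : 'I_(2 * m)%N).
Hypothesis Hmn : mu != nu.
Hypothesis H0 : e mu side0 = e nu side0.

Lemma only2 k s : e k s = e mu side0 -> (k, s) = (mu, side0) \/ (k, s) = (nu, side0).
Proof.
move=> Hks.
case: (eqVneq (k, s) (mu, side0)) => [->|n1]; first by left.
case: (eqVneq (k, s) (nu, side0)) => [->|n2]; first by right.
have := Hc (e mu side0).
have := @card3 _ [pred a : 'I_(2 * m)%N * 'I_3 | e a.1 a.2 == e mu side0]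
  (mu, side0) (nu, side0) (k, s).
rewrite !inE /= Hks -H0 eqxx xpair_eqE (negbTE Hmn) /= => /(_ isT isT isT isT n1 n2) H3 H2.
by rewrite H2 in H3.
Qed.

Lemma noti k s : e k s = e mu side0 -> (k == mu) || (k == nu).
Proof. by case/only2 => -[-> _]; rewrite eqxx ?orbT. Qed.

Lemma noti0 k s : e k s = e mu side0 -> s = side0.
Proof. by case/only2 => -[_ ->]. Qed.

Lemma ne_i k s : s != side0 -> (e k s == e mu side0) = false.
Proof. move=> hs; apply/negbTE/eqP => /noti0 hs0; by rewrite hs0 eqxx in hs. Qed.

Lemma ne_i' k s : k != mu -> k != nu -> (e k s == e mu side0) = false.
Proof. move=> h1 h2; apply/negbTE/eqP => /noti; by rewrite (negbTE h1) (negbTE h2). Qed.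

Lemma Fi : Fmap e y z (e mu side0) = y mu / z mu * (y nu / z nu).
Proof.
rewrite FmapE (bigD1 mu) // (bigD1 nu) 1?eq_sym //= big1 ?mulr1.
  rewrite /T /hc (@ne_i mu side1) // (@ne_i mu side2) // (@ne_i nu side1) // (@ne_i nu side2) // eqxx -H0 eqxx /hcoord /=.
  by rewrite !mulr1.
move=> k /andP[h1 h2]; by rewrite /T /hc !ne_i' // !mulr1.
Qed.


Lemma Dpos : 0 < flipD mu nu y z.
Proof.
have [? ?] := hyz mu; have [? ?] := hyz nu.
by rewrite /flipD addr_gt0 ?mulr_gt0.
Qed.

Lemma flip_ok h :
  Fmap (tri_flip mu nu e) (flip_y mu nu y z) (flip_z mu nu y z) h
  = shear_flip (e mu side0) (e mu side1) (e nu side2)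
               (e nu side1) (e mu side2) (Fmap e y z) h.
Proof.
have Hnm : (nu == mu) = false by rewrite eq_sym (negbTE Hmn).
have Rest : \prod_(k | (k != mu) && (k != nu))
    T (tri_flip mu nu e) (flip_y mu nu y z) (flip_z mu nu y z) h k
  = \prod_(k | (k != mu) && (k != nu)) T e y z h k.
  apply: eq_bigr => k /andP[/negbTE h1 /negbTE h2].
  by rewrite /T /hc /tri_flip /hcoord /flip_y /flip_z h1 h2.
rewrite /shear_flip Fi !FmapE (bigD1 mu) // (bigD1 nu) 1?eq_sym //=.
rewrite [in RHS](bigD1 mu) // [in RHS](bigD1 nu) 1?eq_sym //= Rest.
set r := \prod_(k | _) T e y z h k.
rewrite /T /hc /tri_flip /hcoord /flip_y /flip_z !eqxx Hnm /=.
have Dp := Dpos.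
move: Dp; rewrite /flipD.
have [ym zm] := hyz mu; have [yn zn] := hyz nu.
case: (eqVneq h (e mu side0)) => [eh|hne].
  have r1 : r = 1.
    rewrite /r big1 // => k /andP[h1 h2].
    by rewrite /T /hc eh !ne_i' // !mulr1.
  rewrite r1 eh -H0 eqxx (@ne_i mu side1) // (@ne_i mu side2) // (@ne_i nu side1) // (@ne_i nu side2) //.
  move: (y mu) (z mu) (y nu) (z nu) ym zm yn zn => a b c d ha hb hc hd hD.
  rewrite !mulr1 ?mul1r. field.
  by rewrite !lt0r_neq0.
have hne' : (e mu side0 == h) = false by rewrite eq_sym (negbTE hne).
rewrite -H0 hne' !(eq_sym h).
move: (y mu) (z mu) (y nu) (z nu) ym zm yn zn => a b c d ha hb hc hd hD.
case: (e mu side1 == h); case: (e mu side2 == h); case: (e nu side1 == h); case: (e nu side2 == h);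
  rewrite ?mulr1 ?mul1r; try field; by rewrite ?lt0r_neq0.
Qed.

End Flip.
End Main.

Unset Implicit Arguments.
Set Strict Implicit.
Theorem proposition4p4 (R : realFieldType) (g p m : nat)
  (hp : (0 < p)%N) (hm : (0 < m)%N) (hgpm : (m + 2 = 2 * g + p)%N)
  (e : dtri m) (he : @is_decorated_ideal_triangulation g p m e)
  (y z : 'I_(2 * m)%N -> R) (hyz : forall k, 0 < y k /\ 0 < z k) :
  (* reindexing *)
  (forall alpha : {perm 'I_(2 * m)%N},
     forall h, Fmap (tri_reindex alpha e) (reindex_y alpha y) (reindex_y alpha z) h
               = Fmap e y z h) /\
  (* mark rotation *)
  (forall i : 'I_(2 * m)%N,
     forall h, Fmap (mark_rot i e) (rot_y i y z) (rot_z i y z) h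
               = Fmap e y z h) /\
  (* diagonal exchange *)
  (forall mu nu : 'I_(2 * m)%N, mu != nu -> e mu side0 = e nu side0 ->
     forall h, Fmap (tri_flip mu nu e) (flip_y mu nu y z) (flip_z mu nu y z) h
               = shear_flip (e mu side0) (e mu side1) (e nu side2)
                            (e nu side1) (e mu side2) (Fmap e y z) h).
Proof.
case: he => Hc _ _.
split; first exact: reindex_ok.
split; first exact: rot_ok.
move=> mu nu Hmn H0 h.
exact: flip_ok.
Qed.
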